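(* Let $p$ be a prime number and let $a$ be an integer not divisible by $p$. Then the sequence $$\left(\vartheta_p\left(\sum_{k=1}^{n}\left(\frac{1}{a^k}+\frac{1}{(p-a)^k}\right)\frac{p^k}{k}\right)\right)_{n\geq 1}$$ is unbounded from above.
   Context: For a prime $p$ and a rational number $r$, $\vartheta_p(r)$ denotes the $p$-adic valuation of $r$ (with $\vartheta_p(0)=+\infty$). *)

(* Defs.v *)
From mathcomp Require Import all_boot all_order all_algebra.
Set Implicit Arguments. Unset Strict Implicit. Unset Printing Implicit Defensive.
Import Order.TTheory GRing.Theory Num.Theory.
Local Open Scope ring_scope.

(* p-adic valuation of a rational number: None stands for +oo (r = 0);
   otherwise v_p(numerator) - v_p(denominator). *)
Definition padic_val (p : nat) (r : rat) : option int :=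
  if r == 0 then None
  else Some ((logn p `|numq r|%N)%:Z - (logn p `|denq r|%N)%:Z).

Definition lt_ext (M : int) (v : option int) : Prop :=
  match v with None => True | Some w => M < w end.

Definition S (p : nat) (a : int) (n : nat) : rat :=
  \sum_(1 <= k < n.+1)
     (((a%:~R : rat) ^- k + ((p%:Z - a)%:~R : rat) ^- k) * (p%:R : rat) ^+ k / k%:R).

(* Main.v *)
Require Import Defs.
From mathcomp Require Import all_boot all_order all_algebra.
From mathcomp Require Import ring lra zify.
Import Order.TTheory GRing.Theory Num.Theory.
Local Open Scope ring_scope.

Set Implicit Arguments.
Section V.
Variable p : nat.
Hypothesis Hp : prime p.

Definition vge (e : nat) (r : rat) := exists (u d : int),
  ~~ (p%:Z %| d)%Z /\ r * d%:~R = (p ^ e)%:R * u%:~R.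

Lemma ndvd_mul (d d' : int) : ~~ (p%:Z %| d)%Z -> ~~ (p%:Z %| d')%Z -> ~~ (p%:Z %| d * d')%Z.
Proof. rewrite !dvdzE abszM Euclid_dvdM //= => /negPf -> /negPf ->. by []. Qed.

Lemma ndvd1 : ~~ (p%:Z %| 1)%Z.
Proof. by rewrite dvdzE /= dvdn1 neq_ltn prime_gt1 ?orbT. Qed.

Lemma vge0 e : vge e 0.
Proof. exists 0, 1; split; first exact: ndvd1. by rewrite !mul0r mulr0. Qed.

Lemma vge_int z : vge 0 z%:~R.
Proof. exists z, 1; split; first exact: ndvd1.
 by rewrite expn0 mul1r mulr1. Qed.

Lemma vgeD e r r' : vge e r -> vge e r' -> vge e (r + r').
Proof.
move=> [u [d [Hd E]]] [u' [d' [Hd' E']]].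
exists (u * d' + u' * d), (d * d'); split; first exact: ndvd_mul.
rewrite intrM intrD !intrM mulrDl.
have -> : r * (d%:~R * d'%:~R) = (r * d%:~R) * d'%:~R by ring.
have -> : r' * (d%:~R * d'%:~R) = (r' * d'%:~R) * d%:~R by ring.
rewrite E E'; ring.
Qed.

Lemma vgeM e f r r' : vge e r -> vge f r' -> vge (e + f) (r * r').
Proof.
move=> [u [d [Hd E]]] [u' [d' [Hd' E']]].
exists (u * u'), (d * d'); split; first exact: ndvd_mul.
rewrite intrM intrM expnD natrM.
have -> : r * r' * (d%:~R * d'%:~R) = (r * d%:~R) * (r' * d'%:~R) by ring.
rewrite E E'; ring.
Qed.

Lemma vgeW e f r : (f <= e)%N -> vge e r -> vge f r.
Proof.
move=> Hfe [u [d [Hd E]]]; exists (u * (p ^ (e - f))%:Z), d; split => //.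
rewrite E intrM -(subnKC Hfe) expnD natrM addKn; ring.
Qed.

Lemma vgeX e r m : vge e r -> vge (e * m) (r ^+ m).
Proof.
move=> H; elim: m => [|m IH]; first by rewrite muln0 expr0; have := vge_int 1.
by rewrite exprS mulnS; apply: vgeM.
Qed.

Lemma vge_sum e n (F : nat -> rat) : (forall i, (i < n)%N -> vge e (F i)) ->
  vge e (\sum_(i < n) F i).
Proof.
elim: n => [|n IH] H; first by rewrite big_ord0; exact: vge0.
rewrite big_ord_recr /=; apply: vgeD; last exact: H.
by apply: IH => i Hi; apply: H; lia.
Qed.

Lemma vge_divn e r m : (0 < m)%N -> vge (e + logn p m) r -> vge e (r / m%:R).
Proof.
move=> Hm [u [d [Hd E]]].
have [m' Hpm' Em] := pfactor_coprime Hp Hm.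
exists u, (d * m'%:Z); split.
  apply: ndvd_mul => //; rewrite dvdzE /= -prime_coprime //.
rewrite intrM.
have Hm0 : (m%:R : rat) != 0 by rewrite pnatr_eq0; lia.
have Hp0 : ((p ^ logn p m)%:R : rat) != 0 by rewrite pnatr_eq0 expn_eq0; have := prime_gt1 Hp; lia.
apply: (mulIf Hp0).
have -> : r / m%:R * (d%:~R * m'%:~R) * (p ^ logn p m)%:R = (r * d%:~R) * ((m' * p ^ logn p m)%:R / m%:R).
  rewrite natrM; have -> : (m'%:~R : rat) = m'%:R by []. ring.
rewrite -Em divff // mulr1 E expnD natrM; ring.
Qed.

Lemma vge_val e r : vge e r -> r != 0 ->
  (e%:Z <= (logn p `|numq r|)%:Z - (logn p `|denq r|)%:Z)%R.
Proof.
move=> [u [d [Hd E]]] Hr.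
have Ei : numq r * d = denq r * (p ^ e)%:Z * u.
  apply: (@intr_inj rat). rewrite !intrM numqE.
  have -> : (((p ^ e)%:Z)%:~R : rat) = (p ^ e)%:R by rewrite pmulrn.
  rewrite -mulrA -E; ring.
have Ea : (`|numq r| * `|d| = `|denq r| * (p ^ e * `|u|))%N.
  by rewrite -!abszM Ei -mulrA abszM abszM.
have Hcop := coprime_num_den r.
have Hcop' : coprime `|denq r| `|numq r| by rewrite coprime_sym.
have Hden : (`|denq r| %| `|d|)%N.
  by rewrite -(Gauss_dvdr _ (Hcop' : coprime `|denq r| `|numq r|)) Ea dvdn_mulr.
have Hden1 : logn p `|denq r| = 0%N.
  apply: logn_coprime; rewrite prime_coprime //; apply/negP => Hpd.
  by move: Hd; rewrite dvdzE /= (dvdn_trans Hpd Hden).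
have Hnum : (p ^ e %| `|numq r|)%N.
  have Hc : coprime (p ^ e) `|d|.
    by apply: coprimeXl; rewrite prime_coprime //; move: Hd; rewrite dvdzE.
  by rewrite -(Gauss_dvdl _ Hc) Ea dvdn_mull // dvdn_mulr.
have Hn0 : (0 < `|numq r|)%N by rewrite absz_gt0 numq_eq0.
rewrite Hden1 subr0 lez_nat -pfactor_dvdn //.
Qed.
End V.
Definition cf (k m : nat) : rat := (-1)^+(k - m) * k%:R * 'C(m, k - m)%:R / m%:R.

Lemma coef_rec k i : (0 < k)%N -> (i <= k)%N -> cf k.+2 i.+1 = cf k.+1 i - cf k i.
Proof.
move=> Hk Hik; rewrite /cf.
have [j Ek] : exists j, k = (i + j)%N by exists (k - i)%N; lia.
rewrite Ek in Hk *.
have -> : ((i + j).+2 - i.+1 = j.+1)%N by lia.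
have -> : ((i + j).+1 - i = j.+1)%N by lia.
have -> : ((i + j) - i = j)%N by lia.
clear Hik Ek.
case: i Hk => [|i] Hk.
  rewrite add0n in Hk *. rewrite (bin_small (_ : 1 < j.+1)%N); last by lia.
  by rewrite !mulr0n !invr0 !mulr0 !mul0r subr0.
have Hi0 : (i.+1%:R : rat) != 0 by rewrite pnatr_eq0.
have Hi1 : (i.+2%:R : rat) != 0 by rewrite pnatr_eq0.
case: (leqP j i.+1) => Hji; last first.
  rewrite !bin_small; try lia. by rewrite !mulr0 !mul0r subr0.
rewrite binS.
have HB := mul_bin_left i.+1 j.
have HB' : ('C(i.+1, j.+1)%:R : rat) = (i.+1 - j)%:R * 'C(i.+1, j)%:R / j.+1%:R.
  have Hj0 : (j.+1%:R : rat) != 0 by rewrite pnatr_eq0.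
  have H := congr1 (fun n => n%:R : rat) HB; rewrite /= !natrM in H.
  by rewrite -H [j.+1%:R * _]mulrC mulfK.
rewrite natrD HB' !exprS.
have e1 : ((i.+1 + j).+2%:R : rat) = i%:R + j%:R + 3%:R by rewrite -!natrD; congr (_ *+ _); lia.
have e2 : ((i.+1 + j).+1%:R : rat) = i%:R + j%:R + 2%:R by rewrite -!natrD; congr (_ *+ _); lia.
have e3 : ((i.+1 + j)%:R : rat) = i%:R + j%:R + 1%:R by rewrite -!natrD; congr (_ *+ _); lia.
have e4 : (i.+2%:R : rat) = i%:R + 2%:R by rewrite -!natrD; congr (_ *+ _); lia.
have e5 : (i.+1%:R : rat) = i%:R + 1%:R by rewrite -!natrD; congr (_ *+ _); lia.
have e6 : (j.+1%:R : rat) = j%:R + 1%:R by rewrite -!natrD; congr (_ *+ _); lia.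
have e7 : ((i.+1 - j)%:R : rat) = i%:R + 1 - j%:R by rewrite natrB // e5.
rewrite e1 e2 e3 e4 e5 e6 e7.
have Hi0' : (i%:R + 1%:R : rat) != 0 by rewrite -e5 pnatr_eq0.
have Hi1' : (i%:R + 2%:R : rat) != 0 by rewrite -e4 pnatr_eq0.
have Hj0' : (j%:R + 1%:R : rat) != 0 by rewrite -e6 pnatr_eq0.
move: ('C(i.+1, j)%:R : rat) (i%:R : rat) (j%:R : rat) ((-1)^+j : rat) Hi0' Hi1' Hj0' => C I J sg H1 H2 H3.
field. by rewrite H1 H2 H3.
Qed.

Lemma cf0 k : cf k 0 = 0.
Proof. by rewrite /cf mulr0n invr0 mulr0. Qed.

Lemma cfnn k : (0 < k)%N -> cf k k = 1.
Proof.
move=> Hk; rewrite /cf subnn bin0 expr0 mul1r mulr1 divff //.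
by rewrite pnatr_eq0; lia.
Qed.

Section Comb.
Variables x y : rat.
Hypothesis Hxy : x * y = x + y.
Local Notation s := (x + y).
Definition P k := x ^+ k + y ^+ k.

Lemma Prec k : P k.+2 = s * P k.+1 - s * P k.
Proof. rewrite /P -{2}Hxy !exprS; ring. Qed.

Lemma Pform k : (0 < k)%N -> P k = \sum_(m < k.+1) cf k m * s ^+ m.
Proof.
suff H : forall k, P k.+1 = \sum_(m < k.+2) cf k.+1 m * s ^+ m /\
                   P k.+2 = \sum_(m < k.+3) cf k.+2 m * s ^+ m.
  by case: k => [//|k] _; case: (H k).
move=> {}k; elim: k => [|k [IH1 IH2]].
  split.
    rewrite /P !big_ord_recl big_ord0 /bump /= cf0 cfnn //; ring.
  have c21 : cf 2 1 = - 2%:R.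
    rewrite /cf /= expr1 bin1 divr1; ring.
  rewrite /P !big_ord_recl big_ord0 /bump /= cf0 cfnn // c21.
  have -> : x ^+ 2 + y ^+ 2 = (x + y) ^+ 2 - 2%:R * (x * y) by ring.
  rewrite Hxy; ring.
split=> //.
have E2 : \sum_(m < k.+3) cf k.+2 m * s ^+ m = \sum_(m < k.+2) cf k.+2 m * s^+m + s^+k.+2.
  by rewrite big_ord_recr /= cfnn // mul1r.
have E3 : \sum_(m < k.+4) cf k.+3 m * s ^+ m = \sum_(i < k.+2) cf k.+3 i.+1 * s^+i.+1 + s^+k.+3.
  rewrite big_ord_recl cf0 mul0r add0r big_ord_recr /= cfnn // mul1r.
  by congr (_ + _); apply: eq_bigr.
rewrite Prec IH1 IH2 E2 E3.
rewrite mulrDr -exprS addrAC; congr (_ + _).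
rewrite !mulr_sumr -sumrB; apply: eq_bigr => i _.
rewrite coef_rec //; last by have := ltn_ord i; lia.
rewrite exprS; ring.
Qed.

Definition A n m : rat := \sum_(j < (n - m).+1) (-1)^+j * 'C(m, j)%:R.
Definition T n := \sum_(1 <= k < n.+1) P k / k%:R.

Lemma Sform n : T n = \sum_(m < n.+1) s^+m / m%:R * A n m.
Proof.
elim: n => [|n IH].
  by rewrite /T big_geq // big_ord_recl big_ord0 mulr0n invr0 mulr0 mul0r addr0.
rewrite /T big_nat_recr //= -/(T n) IH Pform //.
rewrite (big_ord_recr n.+1 (fun m : 'I_n.+2 => cf n.+1 m * s ^+ m)) /= cfnn // mul1r.
rewrite (big_ord_recr n.+1 (fun m : 'I_n.+2 => s ^+ m / m%:R * A n.+1 m)) /=.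
have -> : A n.+1 n.+1 = 1 by rewrite /A subnn big_ord_recl big_ord0 /= bin0 mulr1 addr0.
rewrite mulr1 mulrDl addrA; congr (_ + _).
rewrite mulr_suml -big_split; apply: eq_bigr => m _ /=.
have Hm : (m <= n)%N by have := ltn_ord m; lia.
rewrite /A subSn // (big_ord_recr (n - m).+1) /= /cf subSn //.
have Hn : (n.+1%:R : rat) != 0 by rewrite pnatr_eq0.
move: ((m%:R : rat)^-1) => im.
move: Hn; move: (n.+1%:R : rat) => N HN.
field. exact: HN.
Qed.
End Comb.

Lemma altsum m : (0 < m)%N -> \sum_(j < m.+1) (-1)^+j * 'C(m,j)%:R = 0 :> rat.
Proof.
move=> Hm; have H := exprDn (1 : rat) (-1) m.
rewrite subrr expr0n in H.
have -> : \sum_(j < m.+1) (-1)^+j * 'C(m,j)%:R = \sum_(i < m.+1) 1 ^+ (m - i) * (-1) ^+ i *+ 'C(m, i) :> rat.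
  by apply: eq_bigr => i _; rewrite expr1n mul1r mulr_natr.
by rewrite -H; case: m Hm H.
Qed.

Lemma A0 n m : (0 < m)%N -> (2 * m <= n)%N -> A n m = 0.
Proof.
move=> Hm Hn; rewrite /A.
have [d ->] : exists d, (n - m).+1 = (m.+1 + d)%N by exists (n - m - m)%N; lia.
elim: d => [|d IH]; first by rewrite addn0 altsum.
rewrite addnS big_ord_recr /= IH bin_small ?mulr0 ?addr0 //; lia.
Qed.

Theorem theorem3 (p : nat) (a : int) :
  prime p -> ~~ (p%:Z %| a)%Z ->
  forall M : int, exists n : nat, (1 <= n)%N /\ lt_ext M (padic_val p (S p a n)).
Proof.
move=> Hp Ha M.
have Ha0 : (a%:~R : rat) != 0.
  by rewrite intr_eq0; apply: contraNneq Ha => ->; rewrite dvdz0.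
have Hb : ~~ (p%:Z %| (p%:Z - a))%Z.
  apply/negP => H; move/negP: Ha; apply.
  have -> : a = p%:Z - (p%:Z - a) by ring.
  by rewrite rpredB // dvdzz.
have Hb0 : ((p%:Z - a)%:~R : rat) != 0.
  by rewrite intr_eq0; apply: contraNneq Hb => ->; rewrite dvdz0.
have Eb : ((p%:Z - a)%:~R : rat) = p%:R - a%:~R by rewrite intrB.
set x : rat := p%:R / a%:~R.
set y : rat := p%:R / (p%:Z - a)%:~R.
have Hxy : x * y = x + y.
  rewrite /x /y; move: Hb0; rewrite Eb => Hb0; field.
  by rewrite Ha0 Hb0.
have ES : forall n, S p a n = T x y n.
  move=> n; rewrite /S /T /P; apply: eq_bigr => k _.
  rewrite /x /y !exprMn !exprVn; ring.
have vx : vge p 1 x.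
  exists 1, a; split => //; rewrite /x divfK // expn1 mulr1 //.
have vy : vge p 1 y.
  exists 1, (p%:Z - a); split => //; rewrite /y divfK // expn1 mulr1 //.
have vs : vge p 2 (x + y) by rewrite -Hxy; exact: (vgeM Hp vx vy).
have vm1 : vge p 0 (-1).
  exists (-1), 1; split; [exact: (@ndvd1 p Hp) | by rewrite mulr1 expn0 mul1r].
have vA : forall n m, vge p 0 (A n m).
  move=> n m; rewrite /A; apply: (@vge_sum p Hp _ _ (fun j : nat => (-1)^+j * 'C(m,j)%:R)) => i _.
  apply: (@vgeM _ Hp 0 0); first by have := vgeX Hp i vm1; rewrite mul0n.
  exists ('C(m, i))%:Z, 1; split; [exact: (@ndvd1 p Hp) | by rewrite mulr1 expn0 mul1r].
set e := (`|M|.+1)%N.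
exists (2 * e)%N; split; first lia.
have Hv : vge p e (S p a (2 * e)).
  rewrite ES Sform //; apply: (@vge_sum p Hp _ _ (fun m : nat => (x + y)^+m / m%:R * A (2 * e) m)) => m Hm.
  case: (posnP m) => [->|Hm0].
    rewrite mulr0n invr0 mulr0 mul0r; exact: (@vge0 p Hp e).
  case: (leqP m e) => Hme.
    rewrite A0 // ?mulr0; [exact: vge0 | lia].
  rewrite mulrAC; apply: (vge_divn Hp) => //.
  apply: (vgeW (e := (2 * m + 0)%N)); last exact: (vgeM Hp (vgeX Hp m vs) (vA _ m)).
  have := dvdn_leq Hm0 (pfactor_dvdnn p m).
  have := ltn_expl (logn p m) (prime_gt1 Hp).
  lia.
rewrite /lt_ext /padic_val; case: ifP => // H0.
have := vge_val Hp Hv (negbT H0).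
rewrite /e; move: (_ - _) => w.
lia.
Qed.
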